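(* Let $\psi$ be a functional property of generators and $L \subseteq \mathbb{N}$ a restricted language capturing $\psi$. If $\psi$ is undecidable, there can be no automated (computable) process which, given a generator $g'$ satisfying $\psi$, reworks it into an equivalent generator $g \in L$ (i.e. with $\varphi_g = \varphi_{g'}$).
   Context: Programs (generators) are identified with natural numbers in a fixed universal programming language; $\varphi_g$ is the partial computable function computed by $g$. A property $\psi \subseteq \mathbb{N}$ is functional if whenever $\varphi_g = \varphi_{g'}$, $\psi(g) \leftrightarrow \psi(g')$. A language $L \subseteq \mathbb{N}$ captures $\psi$ if $L$ is decidable, every $g \in L$ satisfies $\psi$, and for every $g' \in \mathbb{N}$ satisfying $\psi$ there is $g \in L$ with $\varphi_g = \varphi_{g'}$. *)

(* Defs.v *)
From HB Require Import structures.
From mathcomp Require Import all_boot.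
Set Implicit Arguments. Unset Strict Implicit. Unset Printing Implicit Defensive.

Definition cpair (a b : nat) : nat := ((a + b) * (a + b).+1) %/ 2 + b.

Inductive prog : Type :=
| PZero | PSucc | PId | PFst | PSnd
| PPair of prog & prog
| PComp of prog & prog        (* PComp f g = f o g *)
| PPrim of prog & prog        (* primitive recursion on the second component *)
| PMu of prog.

Fixpoint prog_enc (p : prog) : GenTree.tree nat :=
  match p with
  | PZero => GenTree.Node 0 [::]
  | PSucc => GenTree.Node 1 [::]
  | PId => GenTree.Node 2 [::]
  | PFst => GenTree.Node 3 [::]
  | PSnd => GenTree.Node 4 [::]
  | PPair f g => GenTree.Node 5 [:: prog_enc f; prog_enc g]
  | PComp f g => GenTree.Node 6 [:: prog_enc f; prog_enc g]
  | PPrim f g => GenTree.Node 7 [:: prog_enc f; prog_enc g]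
  | PMu f => GenTree.Node 8 [:: prog_enc f]
  end.

Fixpoint prog_dec (t : GenTree.tree nat) : option prog :=
  match t with
  | GenTree.Node 0 [::] => Some PZero
  | GenTree.Node 1 [::] => Some PSucc
  | GenTree.Node 2 [::] => Some PId
  | GenTree.Node 3 [::] => Some PFst
  | GenTree.Node 4 [::] => Some PSnd
  | GenTree.Node 5 [:: a; b] =>
      match prog_dec a, prog_dec b with Some f, Some g => Some (PPair f g) | _, _ => None end
  | GenTree.Node 6 [:: a; b] =>
      match prog_dec a, prog_dec b with Some f, Some g => Some (PComp f g) | _, _ => None end
  | GenTree.Node 7 [:: a; b] =>
      match prog_dec a, prog_dec b with Some f, Some g => Some (PPrim f g) | _, _ => None end
  | GenTree.Node 8 [:: a] =>
      match prog_dec a with Some f => Some (PMu f) | None => None end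
  | _ => None
  end.

Lemma prog_encK : pcancel prog_enc prog_dec.
Proof. by elim=> //= [f -> g ->|f -> g ->|f -> g ->|f ->]. Qed.

HB.instance Definition _ := Equality.copy prog (pcan_type prog_encK).
HB.instance Definition _ := Countable.copy prog (pcan_type prog_encK).

Inductive eval : prog -> nat -> nat -> Prop :=
| ev_zero x : eval PZero x 0
| ev_succ x : eval PSucc x x.+1
| ev_id x : eval PId x x
| ev_fst a b : eval PFst (cpair a b) a
| ev_snd a b : eval PSnd (cpair a b) b
| ev_pair f g x a b : eval f x a -> eval g x b -> eval (PPair f g) x (cpair a b)
| ev_comp f g x y z : eval g x y -> eval f y z -> eval (PComp f g) x z
| ev_prim0 f g x y : eval f x y -> eval (PPrim f g) (cpair x 0) y
| ev_primS f g x n y z :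
    eval (PPrim f g) (cpair x n) y -> eval g (cpair x (cpair n y)) z ->
    eval (PPrim f g) (cpair x n.+1) z
| ev_mu f x n :
    eval f (cpair x n) 0 ->
    (forall m, m < n -> exists k, eval f (cpair x m) k.+1) ->
    eval (PMu f) x n.

(* phi g : the partial computable function computed by generator (program
   number) g, as its graph. Numbers that do not decode to a program compute
   the nowhere-defined function. *)
Definition phi (g : nat) (x y : nat) : Prop :=
  match (unpickle g : option prog) with
  | Some p => eval p x y
  | None => False
  end.

Definition phi_eq (g g' : nat) : Prop := forall x y, phi g x y <-> phi g' x y.

Definition decidable_set (A : nat -> Prop) : Prop :=
  exists e, forall x, (A x -> phi e x 1) /\ (~ A x -> phi e x 0).

Definition computable_fun (r : nat -> nat) : Prop :=
  exists e, forall x, phi e x (r x).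

Definition functional_prop (psi : nat -> Prop) : Prop :=
  forall g g', phi_eq g g' -> (psi g <-> psi g').

Definition captures (L psi : nat -> Prop) : Prop :=
  [/\ decidable_set L,
      (forall g, L g -> psi g) &
      (forall g', psi g' -> exists g, L g /\ phi_eq g g')].

(* An automated process reworking psi-generators into equivalent generators of L:
   a total computable r which, on every generator satisfying psi, outputs an
   equivalent generator in L, and which never outputs a member of L that is
   not equivalent to its input (outputs outside L signal failure). *)
Definition reworker (L psi : nat -> Prop) (r : nat -> nat) : Prop :=
  [/\ computable_fun r,
      (forall g', psi g' -> L (r g') /\ phi_eq (r g') g') &
      (forall g', L (r g') -> phi_eq (r g') g')].

(* Main.v *)
Require Import Defs.
From mathcomp Require Import all_boot.

Lemma phi_prog {e x y} : phi e x y -> exists p, unpickle e = Some p /\ forall x y, phi e x y <-> eval p x y.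
Proof.
rewrite /phi; case: (unpickle e) => [p|] // _; exists p; split => //.
Qed.

Theorem mainTheorem7 (psi L : nat -> Prop) :
  functional_prop psi -> captures L psi -> ~ decidable_set psi ->
  ~ exists r : nat -> nat, reworker L psi r.
Proof.
move=> Hf [[eL HL] HLpsi Hcov] Hnd [r [[er Her] Hr1 Hr2]].
have Heq : forall g, L (r g) -> psi g.
  move=> g Lg; apply/(Hf _ _ (Hr2 g Lg)); exact: HLpsi.
have [pr [_ Epr]] := phi_prog (Her 0).
have : ~ ~ (L 0 \/ ~ L 0) by tauto.
apply => L0.
have [y Hy] : exists y, phi eL 0 y.
  by case: L0 => H; [exists 1; apply: (proj1 (HL 0)) | exists 0; apply: (proj2 (HL 0))].
have [pL [_ EpL]] := phi_prog Hy.
apply: Hnd; exists (pickle (PComp pL pr)) => x.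
rewrite /phi pickleK; split => H.
- apply: (ev_comp (y := r x)); first by apply/Epr.
  by apply/EpL; apply: (proj1 (HL (r x))); case: (Hr1 x H).
- apply: (ev_comp (y := r x)); first by apply/Epr.
  by apply/EpL; apply: (proj2 (HL (r x))) => Lr; apply: H; apply: Heq.
Qed.
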